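(* Let $\mathbf T:=\mathbf T_0^{\otimes m}$ with rows and columns indexed by $\mathcal X=\{0,1\}^m$. For $\sigma\in\mathcal S_m$ let $\mathbf P_\sigma$ be the permutation matrix with $\mathbf P_\sigma\mathbf e_{(x_1,\dots,x_m)}=\mathbf e_{(x_{\sigma(1)},\dots,x_{\sigma(m)})}$ for all $(x_1,\dots,x_m)\in\mathcal X$. Then $$\mathrm{Aut}(\mathbf T)=\{\mathbf P_\sigma:\sigma\in\mathcal S_m\},$$ and consequently $\mathrm{Aut}(\mathbf T)\cong\mathcal S_m$ and $|\mathrm{Aut}(\mathbf T)|=m!$.
   Context: $\mathbf T_0=\begin{pmatrix}1&0\\1&1\end{pmatrix}$; rows/columns of $\mathbf T_0^{\otimes m}$ are indexed by $x\in\{0,1\}^m$ via the Kronecker rule $(\mathbf A\otimes\mathbf B)_{(x_1,x'),(y_1,y')}=\mathbf A_{x_1,y_1}\mathbf B_{x',y'}$. $\mathrm{Aut}(\mathbf T)$ is the set of permutation matrices $\mathbf P$ with $\mathbf P^\top\mathbf T\mathbf P=\mathbf T$. $\mathcal S_m$ is the symmetric group on $[m]$; $\mathbf e_x$ is the standard basis vector indexed by $x$. *)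

(* Defs.v *)
From mathcomp Require Import all_boot all_order all_fingroup all_algebra.
Set Implicit Arguments. Unset Strict Implicit. Unset Printing Implicit Defensive.
Import GRing.Theory.
Local Open Scope ring_scope.

(* Index set X = {0,1}^m, as functions 'I_m -> bool (false = 0, true = 1). *)
Definition Xm (m : nat) : finType := {ffun 'I_m -> bool}.
(* Matrices indexed by X are represented as 'M[int]_#|X|, where the ordinal
   index i stands for the bit-vector enum_val i (a fixed bijection). *)
Definition nX (m : nat) : nat := #|Xm m|.
Definition bit (b : bool) : 'I_2 := if b then ord_max else ord0.

Definition T0 : 'M[int]_2 :=
  \matrix_(i < 2, j < 2) (if i == ord0 then (if j == ord0 then 1 else 0) else 1).

(* T = T0^{(x) m}: by the Kronecker rule its (x,y) entry is
   prod_k T0_{x_k, y_k}. *)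
Definition Tm (m : nat) : 'M[int]_(nX m) :=
  \matrix_(i, j) \prod_(k < m)
     T0 (bit ((enum_val i : Xm m) k)) (bit ((enum_val j : Xm m) k)).

(* P_sigma e_x = e_{(x_{sigma 1},...,x_{sigma m})}, i.e. column x has its
   single 1 in row  x o sigma. *)
Definition Pmx (m : nat) (s : 'S_m) : 'M[int]_(nX m) :=
  \matrix_(u, v)
    ((enum_val u : Xm m) == [ffun k => (enum_val v : Xm m) (s k)])%:R.

Definition AutT (n : nat) (T : 'M[int]_n) : pred 'M[int]_n :=
  [pred P | is_perm_mx P && (P^T *m T *m P == T)].

(* Main.v *)
Require Import Defs.
From mathcomp Require Import all_boot all_order all_fingroup all_algebra.
Set Implicit Arguments. Unset Strict Implicit. Unset Printing Implicit Defensive.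
Import GRing.Theory.
Local Open Scope ring_scope.

Definition subb m (x y : Xm m) := [forall k, x k ==> y k].
Definition z0 m : Xm m := [ffun _ => false].
Definition ee m (k : 'I_m) : Xm m := [ffun j => j == k].

Lemma subb_ee m k (x : Xm m) : subb (ee k) x = x k.
Proof.
apply/forallP/idP => [H|H j]; first by have := H k; rewrite ffunE eqxx.
by rewrite ffunE; apply/implyP => /eqP->.
Qed.

Lemma subb_z0 m (x : Xm m) : subb x (z0 m) -> x = z0 m.
Proof.
move=> /forallP H; apply/ffunP => k; have := H k; rewrite !ffunE; by case: (x k).
Qed.

Lemma z0_subb m (x : Xm m) : subb (z0 m) x.
Proof. by apply/forallP => k; rewrite ffunE. Qed.

Definition atomP m (x : Xm m) :=
  x <> z0 m /\ forall y, subb y x -> y = z0 m \/ y = x.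

Lemma ee_neq0 m (k : 'I_m) : ee k <> z0 m.
Proof. by move/ffunP/(_ k); rewrite !ffunE eqxx. Qed.

Lemma ee_atom m (k : 'I_m) : atomP (ee k).
Proof.
split; first exact: ee_neq0.
move=> y /forallP H; case Hy: (y k); [right|left]; apply/ffunP => j; rewrite !ffunE.
- case: eqP => [->//|ne]; have := H j; rewrite ffunE; case: (y j) => //= /eqP.
  by move/ne.
- have := H j; rewrite ffunE; case: eqP => [->|_]; rewrite ?Hy //; by case: (y j).
Qed.

Lemma atom_ee m (x : Xm m) : atomP x -> exists k, x = ee k.
Proof.
move=> [nz H]; case: (pickP (fun k => x k)) => [k xk|none]; last first.
  by case: nz; apply/ffunP => j; rewrite ffunE; exact: none j.
have := H (ee k); rewrite subb_ee xk => /(_ isT) [/ee_neq0 //|<-]; by exists k.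
Qed.

Lemma auto_perm m (f : Xm m -> Xm m) : injective f ->
  (forall x y, subb (f x) (f y) = subb x y) ->
  exists s : 'S_m, forall x, f x = [ffun k => x (s k)].
Proof.
move=> finj fsub.
have [g fK gK] := injF_bij finj.
have f0 : f (z0 m) = z0 m.
  apply: subb_z0; rewrite -{2}(gK (z0 m)) fsub; exact: z0_subb.
have fat : forall x, atomP x -> atomP (f x).
  move=> x [nz H]; split; first by rewrite -f0 => /finj.
  move=> y; rewrite -(gK y) fsub => /H [->|->]; [left|right] => //.
have ex : forall k, exists j, f (ee k) = ee j by move=> k; apply: atom_ee; apply: fat; exact: ee_atom.
pose tau k := odflt k [pick j | f (ee k) == ee j].
have tauE : forall k, f (ee k) = ee (tau k).
  move=> k; rewrite /tau; case: pickP => [j /eqP //|none].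
  by have [j Hj] := ex k; have := none j; rewrite Hj eqxx.
have eeinj : forall j j', ee j = ee j' :> Xm m -> j = j'.
  by move=> j j' /ffunP/(_ j); rewrite !ffunE eqxx => /esym/eqP.
have tinj : injective tau.
  by move=> k k' e; apply: eeinj; apply: finj; rewrite !tauE e.
exists (perm tinj)^-1%g => x; apply/ffunP => j; rewrite ffunE.
have := fsub (ee ((perm tinj)^-1%g j)) x.
by rewrite tauE !subb_ee -[tau _](permE tinj) permKV => ->.
Qed.

Lemma Tm_E m i j : Tm m i j = (subb (enum_val j : Xm m) (enum_val i))%:R.
Proof.
rewrite mxE /subb; case: forallP => [H|H].
  rewrite big1 // => k _; have := H k; rewrite /T0 mxE /bit.
  by case: (enum_val i k); case: (enum_val j k).
have [k Hk] : exists k, ~~ ((enum_val j : Xm m) k ==> (enum_val i : Xm m) k).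
  by apply/existsP; rewrite -negb_forall; apply/forallP.
rewrite (bigD1 k) //=; move: Hk; rewrite /T0 mxE /bit.
by case: (enum_val i k); case: (enum_val j k) => //= _; rewrite mul0r.
Qed.

Lemma conjE n (p : 'S_n) (A : 'M[int]_n) :
  (perm_mx p)^T *m A *m perm_mx p = \matrix_(i, j) A (p^-1%g i) (p^-1%g j).
Proof.
rewrite tr_perm_mx -row_permE -[p in perm_mx p]invgK -col_permE.
by apply/matrixP => i j; rewrite !mxE.
Qed.

Definition qf m (s : 'S_m) (u : 'I_(nX m)) : 'I_(nX m) :=
  enum_rank [ffun k => (enum_val u : Xm m) (s^-1%g k)].

Lemma qf_inj m (s : 'S_m) : injective (qf s).
Proof.
move=> u v /enum_rank_inj /ffunP H; apply: enum_val_inj; apply/ffunP => k.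
by have := H (s k); rewrite !ffunE permK.
Qed.

Lemma Pmx_perm m (s : 'S_m) : Pmx s = perm_mx (perm (@qf_inj m s)).
Proof.
apply/matrixP => u v; rewrite !mxE permE /qf; congr (_%:R); congr (nat_of_bool _).
apply/idP/idP => /eqP H; apply/eqP; [rewrite H|rewrite -H].
  by apply: enum_val_inj; rewrite enum_rankK; apply/ffunP => k; rewrite !ffunE permKV.
by rewrite enum_rankK; apply/ffunP => k; rewrite !ffunE permK.
Qed.

Lemma perm_mx_inj n (p q : 'S_n) : perm_mx p = perm_mx q :> 'M[int]_n -> p = q.
Proof.
move/matrixP => H; apply/permP => i; have := H i (p i); rewrite !mxE eqxx.
by case: eqP => // _ /eqP; rewrite oner_eq0.
Qed.

Lemma subb_comp m (s : 'S_m) (x y : Xm m) :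
  subb [ffun k => x (s k)] [ffun k => y (s k)] = subb x y.
Proof.
apply/forallP/forallP => H k; last by rewrite !ffunE; exact: H.
by have := H (s^-1%g k); rewrite !ffunE permKV.
Qed.

Lemma Aut_char m (P : 'M[int]_(nX m)) :
  P \in AutT (Tm m) <-> exists s : 'S_m, P = Pmx s.
Proof.
split.
  rewrite inE => /andP [/is_perm_mxP [p ->]]; rewrite conjE => /eqP /matrixP H.
  pose r := (p^-1)%g.
  pose f (x : Xm m) : Xm m := enum_val (r (enum_rank x)).
  have finj : injective f.
    by move=> x y /enum_val_inj /perm_inj /enum_rank_inj.
  have fsub : forall x y, subb (f x) (f y) = subb x y.
    move=> x y; have := H (enum_rank y) (enum_rank x); rewrite !Tm_E mxE !Tm_E !enum_rankK.
    by case: (subb _ _); case: (subb _ _) => // /eqP; rewrite ?oner_eq0 // eq_sym oner_eq0.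
  have [s fE] := auto_perm finj fsub.
  exists s; rewrite Pmx_perm; congr perm_mx; apply/permP => u; rewrite permE.
  apply: (@perm_inj _ r); rewrite /r permK; apply: enum_val_inj.
  have := fE [ffun k => (enum_val u : Xm m) (s^-1%g k)]; rewrite /f /qf => ->.
  by apply/ffunP => k; rewrite !ffunE permK.
move=> [s ->]; rewrite Pmx_perm inE perm_mx_is_perm /= conjE.
set p := perm _.
have key : forall u v, subb (enum_val (p u) : Xm m) (enum_val (p v))
                        = subb (enum_val u) (enum_val v).
  by move=> u v; rewrite !permE /qf !enum_rankK subb_comp.
apply/eqP/matrixP => i j; rewrite !Tm_E mxE !Tm_E.
by have := key (p^-1%g j) (p^-1%g i); rewrite !permKV => ->.
Qed.

Theorem mainTheorem12 (m : nat) :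
  (forall P : 'M[int]_(nX m), P \in AutT (Tm m) <-> exists s : 'S_m, P = Pmx s)
  /\ injective (@Pmx m)
  /\ (forall s t : 'S_m, Pmx s *m Pmx t = Pmx (s * t)%g)
  /\ (exists L : seq 'M[int]_(nX m),
        [/\ uniq L, size L = m`!%N & forall P, P \in AutT (Tm m) <-> P \in L]).
Proof.
have Pinj : injective (@Pmx m).
  move=> s t; rewrite !Pmx_perm => /perm_mx_inj /permP H.
  apply: (@invg_inj _ s t); apply/permP => k.
  have := H (enum_rank ([ffun j => j == (s^-1)%g k] : Xm m)).
  rewrite (permE (@qf_inj m s)) (permE (@qf_inj m t)) /qf => /enum_rank_inj /ffunP /(_ k).
  rewrite !ffunE !enum_rankK !ffunE eqxx.
  by move/esym/eqP.
split; first exact: Aut_char.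
split; first exact: Pinj.
split.
  by move=> s t; rewrite !Pmx_perm -perm_mxM; congr perm_mx; apply/permP => u;
    rewrite permM !permE /qf enum_rankK; congr enum_rank; apply/ffunP => k;
    rewrite !ffunE invMg permM.
exists (map (@Pmx m) (enum {perm 'I_m})); split.
- by rewrite map_inj_uniq ?enum_uniq.
- by rewrite size_map -cardE card_Sn.
- move=> P; split => [/Aut_char [s ->]|/mapP [s _ ->]]; last by apply/Aut_char; exists s.
  by apply: map_f; rewrite mem_enum.
Qed.
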